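(* Let $n\ge 2$ be even, let $0 < l_1 < l_2 < \cdots < l_t$ be integers, and let $\tau = (1,2,\dots,l_1)(l_1+1,\dots,l_2)\cdots(l_{t-1}+1,\dots,l_t) \in S_{l_t+3n-3}$. Then for every sequence of integers $1 \le a_1 < a_2 < \cdots < a_{l_t} \le l_t+3n-3$, the permutation $(a_1,\dots,a_{l_1})(a_{l_1+1},\dots,a_{l_2})\cdots(a_{l_{t-1}+1},\dots,a_{l_t})$ can be obtained from $\tau$ by successive conjugation by $n$-crossing permutations over $S_{l_t+3n-3}$; that is, it equals $g\tau g^{-1}$ for some $g$ that is a product of $n$-crossing permutations over $S_{l_t+3n-3}$.
   Context: For integers $2\le n\le m$ and $1 \le j \le m-n+1$, the $n$-crossing permutation $\pi_j\in S_m$ is $\pi_j=(j,\,j+n-1)(j+1,\,j+n-2)\cdots$, i.e. the involution sending $i \mapsto 2j+n-1-i$ for $j\le i\le j+n-1$ and fixing all other elements of $\{1,\dots,m\}$. The $n$-crossing permutations over $S_m$ are $\pi_1,\dots,\pi_{m-n+1}$. *)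

(* Defs.v *)
From mathcomp Require Import all_boot all_order all_fingroup.
From mathcomp Require Import zify.
Set Implicit Arguments. Unset Strict Implicit. Unset Printing Implicit Defensive.

(* Points {1,...,m} of the paper are represented by the ordinals 'I_m,
   point k (1-based) being the ordinal k-1. *)

Definition cyc_fun (T : finType) (s : seq T) (x : T) : T :=
  if uniq s then next s x else x.

Lemma cyc_fun_inj (T : finType) (s : seq T) : injective (cyc_fun s).
Proof.
rewrite /cyc_fun; case U: (uniq s); last by [].
exact: can_inj (prev_next U).
Qed.

Definition cyc (T : finType) (s : seq T) : {perm T} := perm (@cyc_fun_inj T s).

(* Given block ends l = [l_1; ...; l_t] and a sequence a = [a_1; ...; a_(l_t)],
   the product of disjoint cycles
   (a_1 ... a_(l_1)) (a_(l_1+1) ... a_(l_2)) ... (a_(l_(t-1)+1) ... a_(l_t)). *)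
Definition block (l : seq nat) (j : nat) {T : Type} (a : seq T) : seq T :=
  let lo := nth 0 (0 :: l) j in
  let hi := nth 0 l j in
  take (hi - lo) (drop lo a).

Definition cycprod (T : finType) (l : seq nat) (a : seq T) : {perm T} :=
  \prod_(j < size l) cyc (block l j a).

Definition tau (m : nat) (l : seq nat) : {perm 'I_m} :=
  cycprod l (take (last 0 l) (enum 'I_m)).

(* The n-crossing permutation pi_j (0-based j, i.e. paper's pi_(j+1)):
   i |-> 2j+n-1-i for j <= i <= j+n-1 (0-based), other points fixed. *)
Definition cross_fun (m n j : nat) (i : 'I_m) : 'I_m :=
  if (j <= i) && (i < j + n) && (j + n <= m) then insubd i (2 * j + n - 1 - i)
  else i.

Lemma cross_funK (m n j : nat) : involutive (@cross_fun m n j).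
Proof.
move=> i; rewrite /cross_fun.
case C: ((j <= i) && (i < j + n) && (j + n <= m)); last by rewrite C.
have lt : 2 * j + n - 1 - i < m.
  move/andP: C => [/andP [h1 h2] h3]; lia.
set k : 'I_m := insubd i (2 * j + n - 1 - i).
have E : val k = 2 * j + n - 1 - i by rewrite /k val_insubd lt.
have C' : (j <= k) && (k < j + n) && (j + n <= m).
  rewrite E; move/andP: C => [/andP [h1 h2] h3]; apply/andP; split; first (apply/andP; split); lia.
rewrite C'; apply: val_inj; rewrite val_insubd E.
move/andP: C => [/andP [h1 h2] h3].
rewrite E; have -> : 2 * j + n - 1 - (2 * j + n - 1 - i) = nat_of_ord i by lia.
by rewrite ltn_ord.
Qed.

Definition crossing (m n j : nat) : {perm 'I_m} :=
  perm (inv_inj (@cross_funK m n j)).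

Definition crossings (m n : nat) : {set {perm 'I_m}} :=
  [set crossing m n j | j : 'I_m & j + n <= m].

(* Main.v *)
Require Import Defs.
From mathcomp Require Import all_boot all_order all_fingroup.
From mathcomp Require Import alt primitive_action.
From mathcomp Require Import zify.
Set Implicit Arguments. Unset Strict Implicit. Unset Printing Implicit Defensive.

Module Aux.
Local Open Scope group_scope.

Section AltSub.
Variables (m : nat) (x0 : 'I_m) (H : {group {perm 'I_m}}).
Let o (i : nat) : 'I_m := insubd x0 i.
Let t (i : nat) := tperm (o i) (o i.+1).
Hypothesis adjH : forall k, k.+2 < m -> t k * t k.+1 \in H.
Hypothesis m2 : 1 < m.

Lemma oE i : i < m -> val (o i) = i.
Proof. by move=> h; rewrite /o val_insubd h. Qed.

Lemma step1 i d : i + d + 1 < m -> t i * t (i + d) \in H.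
Proof.
elim: d => [|d IH] h; first by rewrite addn0 /t tperm2 group1.
have -> : t i * t (i + d.+1) = (t i * t (i + d)) * (t (i + d) * t (i + d).+1).
  by rewrite addnS !mulgA; congr (_ * _); rewrite -mulgA /t tperm2 mulg1.
rewrite groupM ?IH ?adjH //; lia.
Qed.

Lemma step1' i j : i.+1 < m -> j.+1 < m -> t i * t j \in H.
Proof.
move=> hi hj; case: (leqP i j) => hij.
  have -> : j = i + (j - i) by lia.
  apply: step1; lia.
rewrite -[t i * t j]invgK groupV invMg /t !tpermV.
have -> : i = j + (i - j) by lia.
apply: step1; lia.
Qed.

Lemma step2 d x : x + d + 1 < m -> tperm (o x) (o (x + d + 1)) * t 0 \in H.
Proof.
elim: d x => [|d IH] x h.
  rewrite addn0 addn1; apply: step1' => //; lia.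
set y := x + d + 1.
have Ey : x + d.+1 + 1 = y.+1 by rewrite /y; lia.
rewrite Ey.
have -> : tperm (o x) (o y.+1) = (tperm (o x) (o y)) ^ t y.
  rewrite tpermJ /t tpermL tpermD //.
  - by apply/eqP => /(congr1 val); rewrite !oE /y; lia.
  - by apply/eqP => /(congr1 val); rewrite !oE /y; lia.
set tau := tperm (o x) (o y).
have -> : tau ^ t y * t 0 = (t y * t 0) * (t 0 * tau) * (t y * t 0).
  by rewrite /conjg /t tpermV !mulgA -(mulgA _ (tperm (o 0) (o 1)) (tperm (o 0) (o 1))) tperm2 mulg1.
have h1 : t y * t 0 \in H by apply: step1'; rewrite /y; lia.
have h2 : t 0 * tau \in H.
  rewrite -[t 0 * tau]invgK groupV invMg /t /tau !tpermV; apply: IH; rewrite /y; lia.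
by rewrite groupM // groupM.
Qed.

Lemma step2' (x y : 'I_m) : x != y -> tperm x y * t 0 \in H.
Proof.
wlog hxy : x y / x < y.
  move=> W ne; case: (ltngtP x y) => c; first exact: W.
  - by rewrite tpermC; apply: W => //; rewrite eq_sym.
  - by move/eqP: ne; case; apply: val_inj.
move=> _.
have ex : x = o x by apply: val_inj; rewrite oE.
have yl := ltn_ord y.
have ey : y = o (x + (y - x - 1) + 1) by apply: val_inj; rewrite oE /=; lia.
by rewrite {1}ex ey; apply: step2; lia.
Qed.

Lemma step3 (ts : seq ('I_m * 'I_m)) : all dpair ts ->
  (if odd (size ts) then (\prod_(u <- ts) tperm u.1 u.2) * t 0
   else \prod_(u <- ts) tperm u.1 u.2) \in H.
Proof.
elim/last_ind: ts => [|ts u IH]; first by rewrite big_nil group1.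
rewrite all_rcons => /andP [du dts].
rewrite size_rcons big_rcons /=; move: (IH dts); case: (odd (size ts)) => /= h.
  have -> : \prod_(u0 <- ts) tperm u0.1 u0.2 * tperm u.1 u.2 =
     (\prod_(u0 <- ts) tperm u0.1 u0.2 * t 0) * (t 0 * tperm u.1 u.2).
    by rewrite !mulgA -(mulgA _ (t 0) (t 0)) /t tperm2 mulg1.
  rewrite groupM // -[t 0 * _]invgK groupV invMg /t !tpermV; exact: step2'.
by rewrite -mulgA groupM // step2'.
Qed.

Lemma AltH (s : {perm 'I_m}) : ~~ odd_perm s -> s \in H.
Proof.
case: (prod_tpermP s) => ts -> dts.
by move: (step3 dts); rewrite -odd_perm_prod //; case: odd_perm.
Qed.
End AltSub.

Lemma mod_cases y w : y < w + w -> y %% w = if y < w then y else y - w.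
Proof.
move=> h; case: ifP => h2; first by rewrite modn_small.
have e : y = (y - w) + w by lia.
by rewrite {1}e modnDr modn_small //; lia.
Qed.

Section Cross.
Variables (m n : nat).
Hypothesis n2 : 2 <= n.
Hypothesis nev : ~~ odd n.

Lemma crossE j (x : 'I_m) : nat_of_ord (crossing m n j x) =
  if (j <= x) && (x < j + n) && (j + n <= m) then 2 * j + n - 1 - x else x.
Proof.
rewrite permE /cross_fun; case: ifP => // C; rewrite val_insubd.
by case: ifP => // /negbT; rewrite -leqNgt; lia.
Qed.

Lemma cross_in j : j + n <= m -> crossing m n j \in <<crossings m n>>.
Proof.
move=> h; apply: mem_gen; apply/imsetP.
have jm : j < m by lia.
by exists (Ordinal jm); rewrite // inE.
Qed.

Definition cc j := crossing m n j * crossing m n j.+1.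

Definition win j d x := if (j <= x) && (x < j + n.+1) then j + (x - j + d) %% n.+1 else x.

Lemma ccE j (x : 'I_m) : j.+1 + n <= m -> nat_of_ord (cc j x) = win j 2 x.
Proof.
move=> h; rewrite /cc permM (crossE j.+1); move: (crossE j x); rewrite /win.
move: (nat_of_ord (crossing m n j x)) => y.
case: (boolP ((j <= x) && (x < j + n.+1))) => hw.
  rewrite mod_cases; last by lia.
  by repeat case: ifP; lia.
by repeat case: ifP; lia.
Qed.

Lemma win_comp j a b x : win j a (win j b x) = win j (b + a) x.
Proof.
rewrite [win j b x]/win; case: ifP => hx; last by rewrite /win hx.
have lt := @ltn_pmod (x - j + b) n.+1 (ltn0Sn _).
rewrite /win hx ifT; last lia.
by rewrite addKn modnDml addnA.
Qed.

Lemma win_mod j d x : win j d x = win j (d %% n.+1) x.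
Proof. by rewrite /win modnDmr. Qed.

Lemma ccX j d (x : 'I_m) : j.+1 + n <= m -> nat_of_ord ((cc j ^+ d) x) = win j (2 * d) x.
Proof.
move=> h; elim: d => [|d IH].
  rewrite expg0 perm1 /win muln0 addn0; case: ifP => // hw.
  rewrite modn_small; lia.
by rewrite expgSr permM ccE // IH win_comp; congr win; lia.
Qed.

Definition RR j k := cc j ^+ (k * n./2.+1).

Lemma RRE j k (x : 'I_m) : j.+1 + n <= m -> k <= n ->
  nat_of_ord (RR j k x) = if (j <= x) && (x < j + n.+1) then
     (if x + k < j + n.+1 then x + k else x + k - n.+1) else x.
Proof.
move=> h hk; rewrite /RR ccX // win_mod.
have -> : (2 * (k * n./2.+1) = k * n.+1 + k)%N.
  have := odd_double_half n; rewrite (negbTE nev) add0n => e.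
  move: e; rewrite -muln2; set q := n./2 => e; rewrite -e; nia.
rewrite modnMDl -win_mod /win; case: ifP => // hw.
rewrite mod_cases; last lia.
by repeat case: ifP; lia.
Qed.

Lemma RR_in j k : j.+1 + n <= m -> RR j k \in <<crossings m n>>.
Proof.
move=> h; rewrite /RR groupX // /cc groupM // cross_in //; lia.
Qed.

End Cross.

Lemma tpermN m (a b z : 'I_m) : nat_of_ord (tperm a b z) =
  if (nat_of_ord z == a)%N then nat_of_ord b else if (nat_of_ord z == b)%N then nat_of_ord a else nat_of_ord z.
Proof.
rewrite !val_eqE; case: tpermP => [->|->|/eqP na /eqP nb]; rewrite ?eqxx //.
- by case: eqP => // ->.
- by rewrite (negbTE na) (negbTE nb).
Qed.

Section Adj.
Variables (m n : nat) (x0 : 'I_m).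
Hypothesis n2 : 2 <= n.
Hypothesis nev : ~~ odd n.
Hypothesis mn : n.+2 <= m.
Let o (i : nat) : 'I_m := insubd x0 i.
Let HH := <<crossings m n>>.

Lemma oE' i : i < m -> nat_of_ord (o i) = i.
Proof. by move=> h; rewrite /o val_insubd h. Qed.

Lemma RRo j k i : j.+1 + n <= m -> k <= n -> i < m ->
  RR m n j k (o i) = o (if (j <= i) && (i < j + n.+1) then
     (if i + k < j + n.+1 then i + k else i + k - n.+1) else i).
Proof.
move=> h hk hi; apply: val_inj => /=; rewrite RRE // oE' //.
rewrite oE' //; by repeat case: ifP; lia.
Qed.

Lemma base0 : tperm (o 0) (o 1) * tperm (o 1) (o 2) \in HH.
Proof.
have e1 : RR m n 0 1 * RR m n 1 n = tperm (o 0) (o n) * tperm (o n) (o n.+1).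
  apply/permP => x; apply: val_inj => /=.
  rewrite !permM (RRE n2 nev (j := 1)) //; try lia.
  have hh : 1 <= n by lia.
  move: (RRE n2 nev (j := 0) (k := 1) x); move: (nat_of_ord (RR m n 0 1 x)) => y.
  move=> ->; try lia.
  rewrite tpermN; move: (tpermN (o 0) (o n) x); move: (nat_of_ord (tperm (o 0) (o n) x)) => z ->.
  rewrite !oE'; try lia.
  have := ltn_ord x.
  by repeat (case: ifP => /=); lia.
have e2 : (tperm (o 0) (o n) * tperm (o n) (o n.+1)) ^ RR m n 1 2 =
          tperm (o 0) (o 1) * tperm (o 1) (o 2).
  rewrite conjMg !tpermJ !RRo; try lia.
  by congr (tperm (o _) (o _) * tperm (o _) (o _)); repeat case: ifP; lia.
rewrite -e2 -e1 groupJ // ?groupM // RR_in //; lia.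
Qed.

Lemma adjH k : k.+2 < m -> tperm (o k) (o k.+1) * tperm (o k.+1) (o k.+2) \in HH.
Proof.
case: (ltngtP n 2) => [|n3|n2e]; first lia.
  elim: k => [_|k IH hk]; first exact: base0.
  set j := minn k (m - n.+1).
  have hj : j.+1 + n <= m by rewrite /j; lia.
  have -> : tperm (o k.+1) (o k.+2) * tperm (o k.+2) (o k.+3) =
     (tperm (o k) (o k.+1) * tperm (o k.+1) (o k.+2)) ^ RR m n j 1.
    rewrite conjMg !tpermJ !RRo; try lia.
    by congr (tperm (o _) (o _) * tperm (o _) (o _)); repeat (case: ifP => /=); rewrite /j; lia.
  rewrite groupJ ?IH ?RR_in //; lia.
move=> hk.
have -> : tperm (o k) (o k.+1) * tperm (o k.+1) (o k.+2) = RR m n k 2.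
  apply/permP => x; apply: val_inj => /=.
  rewrite permM (RRE n2 nev) //; try lia.
  rewrite tpermN; move: (tpermN (o k) (o k.+1) x); move: (nat_of_ord (tperm (o k) (o k.+1) x)) => z ->.
  rewrite !oE'; try lia.
  have := ltn_ord x.
  by repeat (case: ifP => /=); lia.
rewrite RR_in //; lia.
Qed.

End Adj.

End Aux.
Import Aux.

Lemma cyc_map (m : nat) (g : {perm 'I_m}) (s : seq 'I_m) :
  cyc (map g s) = ((cyc s) ^ g)%g.
Proof.
apply/permP => y; rewrite -(permKV g y) permJ !permE /cyc_fun.
rewrite (map_inj_uniq perm_inj); case: ifP => // u.
by rewrite next_map //; exact: perm_inj.
Qed.

Lemma cycprod_map (m : nat) (g : {perm 'I_m}) l (s : seq 'I_m) :
  cycprod l (map g s) = ((cycprod l s) ^ g)%g.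
Proof.
rewrite /cycprod conjg_prod; apply: eq_bigr => j _.
by rewrite /block -map_drop -map_take cyc_map.
Qed.

Lemma path_last_ge (x : nat) s : path ltn x s -> x <= last x s.
Proof.
elim: s x => [|y s IH] x //= /andP [h1 h2].
by have := IH _ h2; lia.
Qed.

Lemma last_pos (l : seq nat) : l != [::] -> sorted ltn (0 :: l) -> 0 < last 0 l.
Proof.
case: l => // x l' _ /= /andP [h1 h2].
by have := path_last_ge h2; lia.
Qed.

Lemma main_gen (m n : nat) (l : seq nat) (a : seq 'I_m) :
  2 <= n -> ~~ odd n -> 0 < last 0 l -> m = last 0 l + 3 * n - 3 ->
  size a = last 0 l -> sorted (fun x y : 'I_m => x < y) a ->
  exists2 g : {perm 'I_m}, g \in (<<crossings m n>>)%g &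
    cycprod l a = (tau m l ^ g)%g.
Proof.
move=> n2 nev L1 em sa so.
have m0 : 0 < m by lia.
pose x0 : 'I_m := Ordinal m0.
have AH : forall s : {perm 'I_m}, ~~ odd_perm s -> s \in <<crossings m n>>%g.
  move=> s hs; apply: (AltH (x0 := x0) (H := <<crossings m n>>%G)) => //; last by lia.
  move=> k hk; apply: (adjH x0 n2 nev) => //; lia.
have Lm : last 0 l + 2 <= m by lia.
pose s1 := take (last 0 l) (enum 'I_m).
have hs1 : size s1 == last 0 l.
  by rewrite size_take size_enum_ord; apply/eqP; case: ifP => //; lia.
have ha : size a == last 0 l by rewrite sa.
pose t1 := Tuple hs1; pose t2 := Tuple ha.
have tr : [transitive^(last 0 l) 'Alt_('I_m), on setT | 'P].
  apply: ntransitive_weak (Alt_trans 'I_m); rewrite card_ord; lia.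
have d1 : t1 \in (last 0 l).-dtuple(setT).
  rewrite inE /= take_uniq ?enum_uniq //=; by apply/subsetP => x _; rewrite inE.
have d2 : t2 \in (last 0 l).-dtuple(setT).
  rewrite inE /=; apply/andP; split; last by apply/subsetP => x _; rewrite inE.
  apply: (sorted_uniq _ _ so) => [x y z|x]; [exact: ltn_trans | exact: ltnn].
case: (atransP2 tr d1 d2) => g gA e.
have ea : a = map g s1.
  have := congr1 val e => /= ->; apply: eq_map => x; exact: apermE.
exists g; first by apply: AH; rewrite -Alt_even.
by rewrite ea cycprod_map.
Qed.

Theorem lemma2p5 (n : nat) (l : seq nat) (a : seq 'I_(last 0 l + 3 * n - 3)) :
  2 <= n -> ~~ odd n ->
  l != [::] -> sorted ltn (0 :: l) ->
  size a = last 0 l -> sorted (fun x y : 'I_(last 0 l + 3 * n - 3) => x < y) a ->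
  exists2 g : {perm 'I_(last 0 l + 3 * n - 3)},
    g \in (<<crossings (last 0 l + 3 * n - 3) n>>)%g &
    cycprod l a = (tau (last 0 l + 3 * n - 3) l ^ g)%g.
Proof.
move=> n2 nev ln0 sl sa so.
apply: main_gen => //; exact: last_pos.
Qed.
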